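(* Let $n\ge1$ and $\alpha_1,\ldots,\alpha_{2^n}\in\mathbb{R}$. The $n$-qubit diagonal unitary $\mathrm{diag}(e^{i\alpha_1},\ldots,e^{i\alpha_{2^n}})$ can be emulated by an $n$-qutrit circuit, without ancillae, using only qutrit Clifford+$T$ gates and gates $Z(\alpha_j,\alpha_j)$ and $Z(-\alpha_j,-\alpha_j)$ for $j=1,\ldots,2^n$.
   Context: A qutrit is $\mathbb{C}^3$ with computational basis $\ket{0},\ket{1},\ket{2}$; $\omega=e^{2\pi i/3}$. For $a,b\in\mathbb{R}$, $Z(a,b)=\mathrm{diag}(1,\omega^a,\omega^b)$. Qutrit Clifford gates are those generated (up to global phase) by $S=\mathrm{diag}(1,1,\omega)$, the Hadamard $H=\frac{1}{\sqrt3}\begin{pmatrix}1&1&1\\1&\omega&\bar\omega\\1&\bar\omega&\omega\end{pmatrix}$ and $\mathrm{CX}:\ket{i,j}\mapsto\ket{i,(i+j)\bmod3}$; the qutrit $T$ gate is $Z(\tfrac13,-\tfrac13)$. A qutrit unitary $V$ on $n$ qutrits emulates an $n$-qubit unitary $U$ if, identifying the qubit basis states $\ket{x}$, $x\in\{0,1\}^n$, with the qutrit basis states having the same labels, $V\ket{x}=U\ket{x}$ for all $x\in\{0,1\}^n$ (i.e.\ $V$ acts as $U$ on the subspace spanned by $\{\ket{0},\ket{1}\}^{\otimes n}$). The diagonal matrix is written in the standard ordering of the qubit computational basis. *)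

(* Defs.v *)
From HB Require Import structures.
From mathcomp Require Import all_boot all_algebra.
From mathcomp Require Import complex.
From mathcomp Require Import reals trigo.

Set Implicit Arguments.
Unset Strict Implicit.
Unset Printing Implicit Defensive.

Import GRing.Theory Num.Theory.
Local Open Scope ring_scope.

Definition expi (R : realType) (t : R) : R[i] := (cos t +i* sin t)%C.

Definition wpow (R : realType) (a : R) : R[i] := expi (2 * pi * a / 3).
Definition omega (R : realType) : R[i] := wpow (1 : R).

(* single-qutrit gates, as 3x3 matrices (row = output, column = input) *)
Definition Zgate (R : realType) (a b : R) : 'M[R[i]]_3 :=
  \matrix_(i, j) (if i == j then
                    (if val i == 0%N then 1 else if val i == 1%N then wpow a else wpow b)
                  else 0).
Definition Sgate (R : realType) : 'M[R[i]]_3 := Zgate 0 1.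
Definition Tgate (R : realType) : 'M[R[i]]_3 := Zgate (1 / 3) (- (1 / 3)).
Definition Hgate (R : realType) : 'M[R[i]]_3 :=
  \matrix_(i, j) (((Num.sqrt (3 : R))^-1)%:C%C * omega R ^+ (i * j)%N).

Definition trits (n : nat) := {ffun 'I_n -> 'I_3}.

(* n-qutrit operators, as matrices indexed by basis states: A x y = <x|A|y> *)
Definition qop (R : realType) (n : nat) := trits n -> trits n -> R[i].

Definition qmul (R : realType) (n : nat) (A B : qop R n) : qop R n :=
  fun x y => \sum_(z : trits n) A x z * B z y.
Definition qid (R : realType) (n : nat) : qop R n := fun x y => (x == y)%:R.

Definition on1 (R : realType) (n : nat) (k : 'I_n) (G : 'M[R[i]]_3) : qop R n :=
  fun x y => if [forall j, (j != k) ==> (x j == y j)] then G (x k) (y k) else 0.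

Definition cxmap (n : nat) (c t : 'I_n) (y : trits n) : trits n :=
  [ffun j => if j == t then (y c + y t)%R else y j].
Definition cxop (R : realType) (n : nat) (c t : 'I_n) : qop R n :=
  fun x y => (x == cxmap c t y)%:R.

Inductive gate (n : nat) : Type :=
| GateS of 'I_n
| GateH of 'I_n
| GateCX (c t : 'I_n) of c != t
| GateT of 'I_n
| GateZ of 'I_n & 'I_(2 ^ n) & bool.

Definition gate_op (R : realType) (n : nat) (alpha : 'I_(2 ^ n) -> R) (g : gate n)
  : qop R n :=
  match g with
  | GateS k => on1 k (Sgate R)
  | GateH k => on1 k (Hgate R)
  | GateCX c t _ => cxop R c t
  | GateT k => on1 k (Tgate R)
  | GateZ k j s => on1 k (if s then Zgate (alpha j) (alpha j)
                          else Zgate (- alpha j) (- alpha j))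
  end.

(* unitary of a circuit [g1; ...; gm] (g1 applied first) = G_m ... G_1 *)
Definition circuit_op (R : realType) (n : nat) (alpha : 'I_(2 ^ n) -> R)
  (gs : seq (gate n)) : qop R n :=
  foldl (fun U g => qmul (gate_op alpha g) U) (@qid R n) gs.

(* qubit basis state number j (standard ordering, first qubit most
   significant) viewed as a qutrit basis state with the same 0/1 labels *)
Definition qubit_state (n : nat) (j : 'I_(2 ^ n)) : trits n :=
  [ffun k : 'I_n => if odd (j %/ 2 ^ (n.-1 - k)) then 1%R else 0%R].

Definition emulates (R : realType) (n : nat) (V : qop R n) (U : 'M[R[i]]_(2 ^ n)) :=
  forall (j : 'I_(2 ^ n)) (x : trits n),
    V x (qubit_state j) = \sum_(i < 2 ^ n) (x == qubit_state i)%:R * U i j.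

(* Main.v *)
Require Import Defs.
From HB Require Import structures.
From mathcomp Require Import all_boot all_algebra.
From mathcomp Require Import complex.
From mathcomp Require Import reals trigo.
From mathcomp Require Import ring lra zify.
Import GRing.Theory Num.Theory.
Local Open Scope ring_scope.

Set Implicit Arguments.
Unset Strict Implicit.
Unset Printing Implicit Defensive.

Section Phases.
Variable R : realType.
Lemma expiD (a b : R) : expi (a + b) = expi a * expi b.
Proof. rewrite /expi cosD sinD /=. congr (_ +i* _)%C; ring. Qed.
Lemma wpowD (a b : R) : wpow (a + b) = wpow a * wpow b.
Proof. by rewrite /wpow -expiD mulrDr mulrDl. Qed.
Lemma wpow0 : wpow (0:R) = 1.
Proof. by rewrite /wpow /expi !mulr0 !mul0r cos0 sin0. Qed.
Lemma wpow3 : wpow (3:R) = 1.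
Proof. rewrite /wpow /expi mulfK; last by rewrite pnatr_eq0.
rewrite mulr_natl cos2pi sin2pi //. Qed.
Lemma wpowMn (a : R) k : wpow (a *+ k) = wpow a ^+ k.
Proof. elim: k => [|k IH]; first by rewrite mulr0n wpow0 expr0.
by rewrite mulrS wpowD IH exprS. Qed.

Definition zeta := wpow (1 / 3 : R).
Lemma zeta9 : zeta ^+ 9 = 1.
Proof. rewrite /zeta -wpowMn -wpow3; congr wpow.
by rewrite -mulr_natr; field. Qed.
Lemma zeta_mod k : zeta ^+ k = zeta ^+ (k %% 9).
Proof. by rewrite {1}(divn_eq k 9) mulnC exprD exprM zeta9 expr1n mul1r. Qed.
Lemma omega_zeta : omega R = zeta ^+ 3.
Proof. rewrite /omega /zeta -wpowMn; congr wpow.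
by rewrite -mulr_natr; field. Qed.
Lemma omegaX e : omega R ^+ e = zeta ^+ (3 * e).
Proof. by rewrite omega_zeta -exprM. Qed.
Lemma wpowN13 : wpow (- (1 / 3) : R) = zeta ^+ 8.
Proof. rewrite /zeta -wpowMn -[LHS]mul1r -wpow3 -wpowD; congr wpow.
by rewrite -mulr_natr; field. Qed.
Lemma omega3 : omega R ^+ 3 = 1.
Proof. by rewrite omegaX zeta9. Qed.
Lemma omega_neq1 : omega R != 1.
Proof.
apply/eqP => h. have := congr1 (@complex.Im R) h.
rewrite /omega /wpow /expi /= => hs. rewrite mulr1 in hs.
have : 0 < sin (2 * pi / 3 : R).
  apply: sin_gt0_pi; apply/andP; split.
    by apply: divr_gt0 => //; apply: mulr_gt0 => //; exact: pi_gt0.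
  have := @pi_gt0 R. lra.
by rewrite hs; lra.
Qed.
Lemma omega_sum : 1 + omega R + omega R ^+ 2 = 0.
Proof.
have h : (omega R - 1) * (1 + omega R + omega R ^+ 2) = omega R ^+ 3 - 1 by ring.
rewrite omega3 subrr in h.
move/eqP: h; rewrite mulf_eq0 subr_eq0 (negbTE omega_neq1) /=. by move/eqP.
Qed.
Lemma omega_mod k : omega R ^+ k = omega R ^+ (k %% 3).
Proof. by rewrite {1}(divn_eq k 3) mulnC exprD exprM omega3 expr1n mul1r. Qed.
Lemma fourier N : \sum_(v < 3) omega R ^+ (v * N) = if (3 %| N)%N then 3 else 0.
Proof.
rewrite !big_ord_recr big_ord0 /= add0r !mul0n expr0.
rewrite mul1n mul2n -addnn exprD /dvdn.
rewrite (omega_mod N).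
have : (N %% 3 < 3)%N by rewrite ltn_mod.
case: (N %% 3)%N => [|[|[|k]]] //= _.
- rewrite expr0 !mul1r. by rewrite -[3]/(3%:R) !mulrS mulr0n addr0 addrA.
- by rewrite expr1 -expr2 omega_sum.
- rewrite -exprD /= (omega_mod 4) /= expr1 -addrA [_ + omega R]addrC addrA; exact: omega_sum.
Qed.
End Phases.

Section Circ.
Variables (R : realType) (n : nat) (alpha : 'I_(2 ^ n) -> R).
Local Notation circ := (circuit_op alpha).
Local Notation Fg := (fun (U : qop R n) g => qmul (gate_op alpha g) U).

Lemma sum_delta (G : trits n -> R[i]) a :
  \sum_z G z * (z == a)%:R = G a.
Proof.
rewrite (bigD1 a) //= eqxx mulr1 big1 ?addr0 // => z /negbTE ->.
by rewrite mulr0.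
Qed.
Lemma sum_deltaC (G : trits n -> R[i]) a :
  \sum_z (a == z)%:R * G z = G a.
Proof.
rewrite -[RHS](sum_delta G a); apply: eq_bigr => z _.
by rewrite mulrC eq_sym.
Qed.

Lemma foldl_op (U : qop R n) s x y :
  foldl Fg U s x y = \sum_z circ s x z * U z y.
Proof.
elim: s U x y => [|g s IH] U x y /=.
  by rewrite /circuit_op /= /qid sum_deltaC.
rewrite /circuit_op /= IH.
have qid_r (G : qop R n) a b : qmul G (@qid R n) a b = G a b.
  by rewrite /qmul /qid sum_delta.
have -> : \sum_z foldl Fg (qmul (gate_op alpha g) (qid R (n:=n))) s x z * U z y
  = \sum_w \sum_z circ s x z * gate_op alpha g z w * U w y.
  apply: eq_bigr => w _; rewrite IH mulr_suml; apply: eq_bigr => z _.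
  by rewrite qid_r.
rewrite exchange_big /=; apply: eq_bigr => z _.
rewrite /qmul mulr_sumr; apply: eq_bigr => w _; by rewrite mulrA.
Qed.

Lemma circ_cat s1 s2 x y :
  circ (s1 ++ s2) x y = \sum_z circ s2 x z * circ s1 z y.
Proof. by rewrite {1}/circuit_op foldl_cat foldl_op. Qed.

Lemma circ1 g x y : circ [:: g] x y = gate_op alpha g x y.
Proof. by rewrite /circuit_op /= /qmul /qid sum_delta. Qed.

Definition acts (V : qop R n) (f : trits n -> trits n) (p : trits n -> R[i]) :=
  forall x y, V x y = (x == f y)%:R * p y.

Lemma acts_ext V f p g q : acts V f p -> f =1 g -> p =1 q -> acts V g q.
Proof. by move=> h fg pq x y; rewrite h fg pq. Qed.

Lemma acts_cat s1 s2 f p g q :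
  acts (circ s1) f p -> acts (circ s2) g q ->
  acts (circ (s1 ++ s2)) (g \o f) (fun y => q (f y) * p y).
Proof.
move=> h1 h2 x y; rewrite circ_cat.
under eq_bigr => z _ do rewrite h1 mulrA.
by rewrite -mulr_suml sum_delta h2 mulrA.
Qed.

Lemma acts_nil : acts (circ [::]) id (fun _ => 1).
Proof. by move=> x y; rewrite mulr1. Qed.

Definition agree (x y : trits n) k := [forall j, (j != k) ==> (x j == y j)].
Definition upd (y : trits n) k v : trits n := [ffun j => if j == k then v else y j].

Lemma eq_agree x y k : (x == y) = agree x y k && (x k == y k).
Proof.
apply/eqP/andP => [->|[/forallP h /eqP hk]].
  by split => //; apply/forallP => j; apply/implyP.
apply/ffunP => j; case: (eqVneq j k) => [->//|jk].
by apply/eqP; move/implyP: (h j); apply.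
Qed.

Lemma updE y k v j : upd y k v j = if j == k then v else y j.
Proof. by rewrite ffunE. Qed.

Lemma agree_upd x y k v : agree (upd x k v) y k = agree x y k.
Proof.
apply/forallP/forallP => h j; move: (h j); rewrite updE;
by case: (eqVneq j k).
Qed.

Lemma agree_updE x y k : agree x y k -> x = upd y k (x k).
Proof.
move/forallP => h; apply/ffunP => j; rewrite updE.
case: (eqVneq j k) => [->//|jk]. by apply/eqP; move/implyP: (h j); apply.
Qed.

Lemma reindex1 x k (F : trits n -> R[i]) :
  \sum_z (if agree x z k then F z else 0) = \sum_(v : 'I_3) F (upd x k v).
Proof.
have -> : \sum_(v : 'I_3) F (upd x k v) =
          \sum_(v : 'I_3) \sum_z (z == upd x k v)%:R * F z.
  apply: eq_bigr => v _; rewrite -[LHS]sum_deltaC; apply: eq_bigr => z _.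
  by rewrite eq_sym.
rewrite exchange_big /=; apply: eq_bigr => z _.
case: ifP => hag.
  rewrite (bigD1 (z k)) //= big1 ?addr0.
    suff -> : z == upd x k (z k) by rewrite mul1r.
    rewrite (eq_agree _ _ k) updE eqxx /= eqxx andbT.
    apply/forallP => j; apply/implyP => jk; rewrite updE (negbTE jk).
    by move/forallP: hag => /(_ j); rewrite jk /= eq_sym.
  move=> v hv; suff -> : (z == upd x k v) = false by rewrite mul0r.
  apply/negbTE; apply: contra hv => /eqP ->; by rewrite updE eqxx.
rewrite big1 // => v _; suff -> : (z == upd x k v) = false by rewrite mul0r.
apply/negbTE; apply: contraFN hag => /eqP ->.
apply/forallP => j; apply/implyP => jk; by rewrite updE (negbTE jk).
Qed.

End Circ.
Lemma zp_cond (a b : 'I_3) m : (a == - b - (m%:R)) = (3 %| a + m + b)%N.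
Proof.
have -> : (m%:R : 'I_3) = ((m %% 3)%N%:R) by rewrite (Zp_nat_mod (p:=3)).
have -> : (3 %| a + m + b)%N = (3 %| a + (m %% 3) + b)%N.
  by rewrite /dvdn; congr (_ == 0)%N; lia.
have : (m %% 3 < 3)%N by rewrite ltn_mod.
move: (m %% 3)%N => k; move: a b.
by case => [[|[|[|?]]] ?] [[|[|[|?]]] ?]; case: k => [|[|[|?]]].
Qed.

Section Gates.
Variables (R : realType) (n : nat) (alpha : 'I_(2 ^ n) -> R).
Local Notation circ := (circuit_op alpha).
Local Notation acts := (@acts R n).

Definition zph (a b : R) (v : 'I_3) : R[i] :=
  if val v == 0%N then 1 else if val v == 1%N then wpow a else wpow b.

Lemma on1_agree (k : 'I_n) (G : 'M[R[i]]_3) (x y : trits n) :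
  on1 k G x y = if agree x y k then G (x k) (y k) else 0.
Proof. by []. Qed.


Lemma on1_Z (k : 'I_n) (a b : R) (x y : trits n) :
  on1 k (Zgate a b) x y = (x == y)%:R * zph a b (y k).
Proof.
rewrite on1_agree mxE (eq_agree x y k).
case: (agree x y k) => /=; last by rewrite mul0r.
by case: eqP => [->|_]; rewrite ?mul1r ?mul0r.
Qed.

Lemma acts_T k : acts (circ [:: GateT k]) id (fun y => zeta R ^+ (val (y k) ^ 3)).
Proof.
move=> x y; rewrite circ1 /= /Tgate on1_Z /zph; congr (_ * _).
case: (y k) => [[|[|[|?]]] ?] //=; rewrite ?expr0 // ?wpowN13 // !expnS expn0.
Qed.

Lemma acts_Tn k m : acts (circ (nseq m (GateT k))) id (fun y => zeta R ^+ (m * val (y k) ^ 3)).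
Proof.
elim: m => [|m IH]; first by apply: acts_ext (acts_nil _) _ _ => // y; rewrite mul0n expr0.
have -> : nseq m.+1 (GateT k) = [:: GateT k] ++ nseq m (GateT k) by [].
apply: acts_ext (acts_cat (acts_T k) IH) _ _ => // y /=.
by rewrite mulSn exprD mulrC.
Qed.

Lemma acts_CX c t (h : c != t) : acts (circ [:: GateCX h]) (cxmap c t) (fun _ => 1).
Proof. by move=> x y; rewrite circ1 /= /cxop mulr1. Qed.

Lemma acts_GZ k j (s : bool) :
  acts (circ [:: GateZ k j s]) id
    (fun y => if val (y k) == 0%N then 1 else wpow (if s then alpha j else - alpha j)).
Proof.
move=> x y; rewrite circ1 /=; case: s; rewrite on1_Z /zph;
by case: (y k) => [[|[|[|?]]] ?].
Qed.

Lemma agree_updr (x y : trits n) k v : agree x (upd y k v) k = agree x y k.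
Proof.
apply/forallP/forallP => h j; move: (h j); rewrite updE;
by case: (eqVneq j k).
Qed.

Definition sq3 : R[i] := ((Num.sqrt (3 : R))^-1)%:C%C.
Lemma sq3E : sq3 * sq3 * 3 = 1.
Proof.
rewrite /sq3 -rmorphM /=.
have -> : (3 : R[i]) = (3 : R)%:C%C by rewrite rmorph_nat.
rewrite -rmorphM /= -expr2 exprVn sqr_sqrtr ?mulVf //.
by rewrite pnatr_eq0.
Qed.

Lemma acts_H t s (m : trits n -> nat) :
  (forall y v, m (upd y t v) = m y) ->
  acts (circ s) id (fun y => omega R ^+ (val (y t) * m y)) ->
  acts (circ (GateH t :: s ++ [:: GateH t]))
       (fun y => upd y t (- y t - (m y)%:R)) (fun _ => 1).
Proof.
move=> hm hs x y.
rewrite -cat1s circ_cat.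
under eq_bigr => z _ do rewrite circ_cat circ1 /=.
under eq_bigr => z _ do under eq_bigr => w _ do rewrite hs /= mulrA.
under eq_bigr => z _ do rewrite -mulr_suml sum_delta circ1 /= on1_agree.
have ifM (b : bool) (A B : R[i]) : (if b then A else 0) * B = if b then A * B else 0.
  by case: b; rewrite ?mul0r.
under eq_bigr => z _ do rewrite !ifM.
rewrite reindex1.
under eq_bigr => v _ do rewrite on1_agree agree_upd hm !updE eqxx.
rewrite (eq_agree _ _ t) agree_updr updE eqxx.
case hag: (agree x y t); last first.
  by rewrite big1 ?mul0r // => v _; rewrite mulr0.
rewrite /= mulr1 zp_cond.
rewrite (agree_updE hag) hm -(agree_updE hag).
under eq_bigr => v _ do rewrite !mxE.
have -> : \sum_(v < 3) sq3 * omega R ^+ (x t * v) * omega R ^+ (v * m y) *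
     (sq3 * omega R ^+ (v * y t)) = sq3 * sq3 * \sum_(v < 3) omega R ^+ (v * (x t + m y + y t)).
  rewrite mulr_sumr; apply: eq_bigr => v _.
  rewrite !mulnDr !exprD [(v * x t)%N]mulnC; ring.
rewrite fourier; case: ifP => _; last by rewrite mulr0.
by rewrite sq3E.
Qed.
End Gates.

Section Blocks.
Variables (R : realType) (n : nat) (alpha : 'I_(2 ^ n) -> R).
Local Notation circ := (circuit_op alpha).
Local Notation acts := (@acts R n).

Lemma upd_upd (y : trits n) k a b : upd (upd y k a) k b = upd y k b.
Proof. by apply/ffunP => j; rewrite !updE; case: eqP. Qed.
Lemma upd_at (y : trits n) k a : upd y k a k = a.
Proof. by rewrite updE eqxx. Qed.
Lemma upd_ne (y : trits n) k j a : j != k -> upd y k a j = y j.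
Proof. by move=> h; rewrite updE (negbTE h). Qed.
Lemma upd_id (y : trits n) k : upd y k (y k) = y.
Proof. by apply/ffunP => j; rewrite updE; case: eqP => [->|]. Qed.

Lemma acts_conj U M U' f f' p :
  acts (circ U) f (fun _ => 1) -> acts (circ U') f' (fun _ => 1) ->
  (forall y, f' (f y) = y) -> acts (circ M) id p ->
  acts (circ (U ++ M ++ U')) id (p \o f).
Proof.
move=> hU hU' hf hM.
apply: acts_ext (acts_cat hU (acts_cat hM hU')) _ _ => y /=.
  by rewrite hf.
by rewrite !(mulr1, mul1r).
Qed.

Definition Bblock (k : 'I_n) (a : nat) : seq (gate n) :=
  GateH k :: nseq (3 * a) (GateT k) ++ [:: GateH k].

Lemma acts_B k a : acts (circ (Bblock k a)) (fun y => upd y k (- y k - a%:R)) (fun _ => 1).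
Proof.
apply: (acts_H (m := fun _ => a)) => // x y.
rewrite (acts_Tn alpha k (3 * a) x y) omegaX; congr (_ * _).
rewrite zeta_mod [in RHS]zeta_mod; congr (_ ^+ _).
case: (y k) => [[|[|[|?]]] ?] //=; rewrite !expnS expn0; lia.
Qed.

Definition Xblock k := Bblock k 1 ++ Bblock k 0.
Lemma acts_X k : acts (circ (Xblock k)) (fun y => upd y k (y k + 1)) (fun _ => 1).
Proof.
apply: acts_ext (acts_cat (acts_B k 1) (acts_B k 0)) _ _ => y /=; last by rewrite mulr1.
rewrite upd_upd upd_at; congr upd; ring.
Qed.

Definition Dc c t (h : c != t) : seq (gate n) :=
  [:: GateCX h; GateT t; GateCX h; GateT t; GateCX h] ++ nseq 7 (GateT t).

Lemma cx_t c t (y : trits n) : cxmap c t y t = y c + y t.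
Proof. by rewrite /cxmap ffunE eqxx. Qed.
Lemma cx_c c t (y : trits n) : c != t -> cxmap c t y c = y c.
Proof. by move=> h; rewrite /cxmap ffunE (negbTE h). Qed.
Lemma cx3 c t (y : trits n) : c != t -> cxmap c t (cxmap c t (cxmap c t y)) = y.
Proof.
move=> h; apply/ffunP => j; rewrite {1}/cxmap ffunE; case: eqP => [->|hj].
  rewrite !cx_c // !cx_t !cx_c //; move: (y c) (y t) => a b; apply/eqP; move: a b.
  by case => [[|[|[|?]]] ?] [[|[|[|?]]] ?].
by rewrite /cxmap !ffunE; move/eqP/negbTE: hj => ->.
Qed.

Lemma acts_D c t (h : c != t) :
  acts (circ (Dc h)) id (fun y => omega R ^+ (val (y t) * (2 * val (y c) ^ 2))).
Proof.
have e : forall l1 l2 : seq (gate n), l1 ++ l2 = l1 ++ l2 by [].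
rewrite /Dc -[[:: GateCX h; GateT t; GateCX h; GateT t; GateCX h]]/([:: GateCX h] ++ [:: GateT t] ++ [:: GateCX h] ++ [:: GateT t] ++ [:: GateCX h]).
rewrite -!catA.
have H := acts_cat (acts_CX alpha h) (acts_cat (acts_T alpha t) (acts_cat (acts_CX alpha h)
   (acts_cat (acts_T alpha t) (acts_cat (acts_CX alpha h) (acts_Tn alpha t 7))))).
apply: acts_ext H _ _ => y /=.
  exact: cx3.
rewrite !mulr1 !cx_t !cx_c // omegaX -!exprD.
rewrite zeta_mod [in RHS]zeta_mod; congr (_ ^+ _).
move: (y c) (y t) => a b; move: a b.
by case => [[|[|[|?]]] ?] [[|[|[|?]]] ?].
Qed.
Definition Adder c t (h : c != t) : seq (gate n) :=
  (GateH t :: Dc h ++ [:: GateH t]) ++ Bblock t 0.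

Lemma acts_A c t (h : c != t) :
  acts (circ (Adder h)) (fun y => upd y t (y t + (2 * val (y c) ^ 2)%:R)) (fun _ => 1).
Proof.
have hm : forall y v, (fun y : trits n => 2 * val (y c) ^ 2)%N (upd y t v) = (2 * val (y c) ^ 2)%N.
  by move=> y v /=; rewrite upd_ne.
apply: acts_ext (acts_cat (acts_H hm (acts_D h)) (acts_B t 0)) _ _ => y /=; last by rewrite mulr1.
rewrite upd_upd upd_at; congr upd; ring.
Qed.
End Blocks.

Section Generic.
Variables (R : realType) (n : nat) (alpha : 'I_(2 ^ n) -> R).
Local Notation circ := (circuit_op alpha).
Local Notation acts := (@acts R n).

Lemma acts_foldr (T : eqType) (B B' : T -> seq (gate n)) (f f' : T -> trits n -> trits n)
  (ks : seq T) M p :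
  (forall k, k \in ks -> acts (circ (B k)) (f k) (fun _ => 1) /\
     acts (circ (B' k)) (f' k) (fun _ => 1) /\ forall y, f' k (f k y) = y) ->
  acts (circ M) id p ->
  acts (circ (foldr (fun k acc => B k ++ acc ++ B' k) M ks)) id
       (fun y => p (foldl (fun z k => f k z) y ks)).
Proof.
elim: ks p => [|k ks IH] p hB hM /=; first by apply: acts_ext hM _ _.
have [h1 [h2 h3]] := hB k (mem_head _ _).
have hks := fun k' (hk' : k' \in ks) => hB k' (mem_behead (s := k :: ks) hk').
exact: (acts_conj h1 h2 h3 (IH p hks hM)).
Qed.

Lemma acts_flatten (T : Type) (C : T -> seq (gate n)) (pc : T -> trits n -> R[i]) (l : seq T) :
  (forall j, acts (circ (C j)) id (pc j)) ->
  acts (circ (flatten (map C l))) id (fun y => \prod_(j <- l) pc j y).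
Proof.
move=> hC; elim: l => [|j l IH] /=.
  by apply: acts_ext (acts_nil _) _ _ => // y; rewrite big_nil.
apply: acts_ext (acts_cat (hC j) IH) _ _ => // y /=.
by rewrite big_cons mulrC.
Qed.
End Generic.

Section Main.
Variables (R : realType) (n' : nat) (alpha : 'I_(2 ^ n'.+1) -> R).
Local Notation n := n'.+1.
Local Notation circ := (circuit_op alpha).
Local Notation acts := (@acts R n).

Definition wire (k : nat) : 'I_n := inord k.
Lemma wire_val k : (k <= n')%N -> val (wire k) = k.
Proof. by move=> hk; apply: inordK. Qed.
Lemma wire_neq k : (k < n')%N -> wire k != wire k.+1.
Proof.
move=> hk; rewrite -(inj_eq val_inj) !wire_val //; last exact: ltnW.
by rewrite neq_ltn ltnSn.
Qed.

Definition adderg (c t : 'I_n) : seq (gate n) :=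
  match @idP (c != t) in reflect _ b return seq (gate n) with ReflectT h => @Adder n c t h | ReflectF _ => [::] end.
Lemma addergE c t (h : c != t) : adderg c t = Adder h.
Proof.
rewrite /adderg; destruct (@idP (c != t)) as [h'|h'].
  by rewrite (bool_irrelevance h' h).
by case: h'.
Qed.

Definition qq (v : 'I_3) : 'I_3 := (2 * val v ^ 2)%N%:R.

Definition stepF k := Xblock (wire k.+1) ++ Xblock (wire k.+1) ++ adderg (wire k) (wire k.+1).
Definition stepB k := adderg (wire k) (wire k.+1) ++ adderg (wire k) (wire k.+1) ++ Xblock (wire k.+1).
Definition sF k (y : trits n) := upd y (wire k.+1) (y (wire k.+1) + 1 + 1 + qq (y (wire k))).
Definition sB k (y : trits n) := upd y (wire k.+1) (y (wire k.+1) + qq (y (wire k)) + qq (y (wire k)) + 1).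

Lemma stepP k : (k < n')%N ->
  acts (circ (stepF k)) (sF k) (fun _ => 1) /\
  acts (circ (stepB k)) (sB k) (fun _ => 1) /\ forall y, sB k (sF k y) = y.
Proof.
move=> hk; have h := wire_neq hk.
rewrite /stepF /stepB !(addergE h); split; [|split].
- apply: acts_ext (acts_cat (acts_X alpha _) (acts_cat (acts_X alpha _) (acts_A alpha h))) _ _ => y /=;
    last by rewrite !mulr1.
  by rewrite !upd_upd !upd_at !upd_ne // eq_sym.
- apply: acts_ext (acts_cat (acts_A alpha h) (acts_cat (acts_A alpha h) (acts_X alpha _))) _ _ => y /=;
    last by rewrite !mulr1.
  by rewrite !upd_upd !upd_at !upd_ne // eq_sym.
- move=> y; rewrite /sB /sF upd_upd upd_at upd_ne //.
  rewrite -[RHS](upd_id y (wire k.+1)); congr upd.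
  move: (y (wire k.+1)) (qq (y (wire k))) => a b; apply/eqP; move: a b.
  by case => [[|[|[|?]]] ?] [[|[|[|?]]] ?].
Qed.

Definition zphase (s : R) (v : 'I_3) : R[i] := if val v == 0%N then 1 else wpow s.

Definition inner j :=
  foldr (fun k acc => stepF k ++ acc ++ stepB k) [:: GateZ (wire n') j false] (iota 0 n').
Definition run (y : trits n) := foldl (fun z k => sF k z) y (iota 0 n').

Lemma acts_inner j :
  acts (circ (inner j)) id (fun y => zphase (- alpha j) (run y (wire n'))).
Proof.
have := @acts_foldr R n alpha nat stepF stepB sF sB (iota 0 n') [:: GateZ (wire n') j false]
  (fun y => zphase (- alpha j) (y (wire n'))).
apply.
  by move=> k; rewrite mem_iota add0n => /andP [_ hk]; exact: stepP.
by apply: acts_ext (acts_GZ alpha _ _ _) _ _.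
Qed.

Definition w0 := wire 0.
Definition sh (a : 'I_3) (y : trits n) := upd y w0 (y w0 + a).

Lemma sh_inv (y : trits n) : sh 1 (sh (1 + 1) y) = y.
Proof.
rewrite /sh upd_upd upd_at -[RHS](upd_id y w0); congr upd.
move: (y w0) => a; apply/eqP; move: a; by case => [[|[|[|?]]] ?].
Qed.
Lemma sh_inv2 (y : trits n) : sh (1 + 1) (sh 1 y) = y.
Proof.
rewrite /sh upd_upd upd_at -[RHS](upd_id y w0); congr upd.
move: (y w0) => a; apply/eqP; move: a; by case => [[|[|[|?]]] ?].
Qed.
Lemma acts_sh1 : acts (circ (Xblock w0)) (sh 1) (fun _ => 1).
Proof. exact: acts_X. Qed.
Lemma acts_sh2 : acts (circ (Xblock w0 ++ Xblock w0)) (sh (1 + 1)) (fun _ => 1).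
Proof.
apply: acts_ext (acts_cat (acts_X alpha w0) (acts_X alpha w0)) _ _ => y /=; last by rewrite mulr1.
by rewrite /sh upd_upd upd_at addrA.
Qed.

Definition core j := (Xblock w0 ++ Xblock w0) ++ inner j ++ Xblock w0.
Lemma acts_core j :
  acts (circ (core j)) id (fun y => zphase (- alpha j) (run (sh (1 + 1) y) (wire n'))).
Proof. exact: (acts_conj acts_sh2 acts_sh1 sh_inv (acts_inner j)). Qed.

Definition K1 j := Xblock w0 ++ [:: GateZ w0 j true] ++ (Xblock w0 ++ Xblock w0).
Lemma acts_K1 j : acts (circ (K1 j)) id (fun y => zphase (alpha j) (sh 1 y w0)).
Proof.
have h : acts (circ [:: GateZ w0 j true]) id (fun y => zphase (alpha j) (y w0)).
  by apply: acts_ext (acts_GZ alpha _ _ _) _ _.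
exact: (acts_conj acts_sh1 acts_sh2 sh_inv2 h).
Qed.

Definition flipset (j : 'I_(2 ^ n)) := [seq k <- enum 'I_n | qubit_state j k == 0].
Definition fl (k : 'I_n) (y : trits n) := upd y k (- y k - 2%:R).
Definition Cj j := foldr (fun k acc => Bblock k 2 ++ acc ++ Bblock k 2) (K1 j ++ core j) (flipset j).
Definition pin j (y : trits n) :=
  zphase (- alpha j) (run (sh (1 + 1) y) (wire n')) * zphase (alpha j) (sh 1 y w0).
Definition pC j (y : trits n) := pin j (foldl (fun z k => fl k z) y (flipset j)).

Lemma acts_Cj j : acts (circ (Cj j)) id (pC j).
Proof.
have := @acts_foldr R n alpha _ (fun k => Bblock k 2) (fun k => Bblock k 2) fl fl (flipset j)
  (K1 j ++ core j) (pin j).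
apply.
  move=> k _; split; first exact: acts_B.
  split; first exact: acts_B.
  move=> y; rewrite /fl upd_upd upd_at -[RHS](upd_id y k); congr upd.
  move: (y k) => a; apply/eqP; move: a; by case => [[|[|[|?]]] ?].
exact: acts_cat (acts_K1 j) (acts_core j).
Qed.


Definition bitv (x : trits n) := forall k, (val (x k) < 2)%N.
Definition allones (x : trits n) m := [forall i : 'I_n, (val i <= m)%N ==> (x i == 1)].

Lemma allonesS x m : (m < n')%N ->
  allones x m.+1 = allones x m && (x (wire m.+1) == 1).
Proof.
move=> hm; apply/forallP/andP => [h|[/forallP h1 h2] i].
  split; last first.
    by move/implyP: (h (wire m.+1)); apply; rewrite wire_val.
  apply/forallP => i; apply/implyP => hi; move/implyP: (h i); apply.
  exact: leqW.
apply/implyP; rewrite leq_eqVlt ltnS; case/orP => [/eqP hi|hi].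
  suff -> : i = wire m.+1 by [].
  by apply: val_inj; rewrite /= wire_val.
by move/implyP: (h1 i); apply.
Qed.

Lemma brute1 (b v : 'I_3) : (val b < 2)%N ->
  (b + 1 + 1 + qq v == 0) = (v == 0) && (b == 1).
Proof. by case: b => [[|[|[|?]]] ?]; case: v => [[|[|[|?]]] ?]. Qed.

Lemma chain_inv x m : bitv x -> (m <= n')%N ->
  let z := foldl (fun z k => sF k z) (sh (1 + 1) x) (iota 0 m) in
  forall i : 'I_n, ((val i <= m)%N -> (z i == 0) = allones x (val i)) /\
                   ((m < val i)%N -> z i = x i).
Proof.
move=> hx; elim: m => [|m IH] hm z i.
  rewrite /z /= /sh; split.
    rewrite leqn0 => /eqP hi.
    have -> : i = w0 by apply: val_inj; rewrite /= hi /w0 wire_val.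
    rewrite upd_at (_ : val w0 = 0%N); last by rewrite /w0 wire_val.
    have -> : allones x 0 = (x w0 == 1).
      apply/forallP/idP => [h|h j]; first by move/implyP: (h w0); apply; rewrite /w0 wire_val.
      apply/implyP; rewrite leqn0 => /eqP hj.
      by have -> : j = w0 by apply: val_inj; rewrite /= hj /w0 wire_val.
    by have := hx w0; case: (x w0) => [[|[|[|?]]] ?].
  move=> hi; rewrite upd_ne //; apply/eqP => e; move: hi; by rewrite e /w0 wire_val.
have hm' : (m <= n')%N by exact: ltnW.
have {}IH := IH hm'.
rewrite /z (_ : iota 0 m.+1 = iota 0 m ++ [:: m]); last by rewrite -[m.+1]addn1 iotaD.
rewrite foldl_cat /=.
set z0 := foldl (fun z k => sF k z) (sh (1 + 1) x) (iota 0 m).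
have IHz : forall i : 'I_n, ((val i <= m)%N -> (z0 i == 0) = allones x (val i)) /\
                   ((m < val i)%N -> z0 i = x i) := IH.
rewrite /sF; case: (eqVneq i (wire m.+1)) => [->|hi].
  rewrite upd_at wire_val //; split; last by rewrite ltnn.
  move=> _; rewrite (IHz _).2; last by rewrite wire_val.
  rewrite brute1 // (IHz _).1 wire_val ?(ltnW hm) // allonesS //.
rewrite upd_ne //; split => hi2.
  apply: (IHz i).1; move: hi2; rewrite leq_eqVlt ltnS; case/orP => // /eqP e.
  have ei : i = wire m.+1 by apply: val_inj; rewrite /= wire_val.
  by rewrite ei eqxx in hi.
apply: (IHz i).2; exact: ltnW.
Qed.

Lemma run_zero x : bitv x -> (run (sh (1 + 1) x) (wire n') == 0) = [forall i, x i == 1].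
Proof.
move=> hx; have := (chain_inv hx (leqnn n') (wire n')).1.
rewrite wire_val // => ->; last by [].
apply/forallP/forallP => h i; first exact: (implyP (h i) (ltn_ord i)).
by apply/implyP => _; exact: h i.
Qed.

Lemma foldl_fl (ks : seq 'I_n) x i : uniq ks ->
  (foldl (fun z k => fl k z) x ks) i = if i \in ks then - x i - 2%:R else x i.
Proof.
elim: ks x => [|k ks IH] x //= /andP [hk hu].
rewrite IH // in_cons /fl updE; case: (eqVneq i k) => [->|hik] /=;
  by rewrite ?(negbTE hk).
Qed.

Lemma qsE (j : 'I_(2 ^ n)) k : qubit_state j k = if odd (j %/ 2 ^ (n.-1 - k)) then 1 else 0.
Proof. by rewrite ffunE. Qed.

Lemma bits_inj N (a b : nat) : (a < 2 ^ N)%N -> (b < 2 ^ N)%N ->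
  (forall m, (m < N)%N -> odd (a %/ 2 ^ m) = odd (b %/ 2 ^ m)) -> a = b.
Proof.
elim: N a b => [|N IH] a b.
  by rewrite expn0 !ltnS !leqn0 => /eqP -> /eqP ->.
move=> ha hb h.
rewrite (divn_eq a 2) (divn_eq b 2) !modn2.
have h0 := h 0%N isT; rewrite expn0 !divn1 in h0.
rewrite h0; congr (_ * _ + _)%N; apply: IH.
- by rewrite ltn_divLR // -expnSr.
- by rewrite ltn_divLR // -expnSr.
- move=> m hm; have := h m.+1 hm; by rewrite expnS -!divnMA.
Qed.

Lemma qs_inj (j0 j : 'I_(2 ^ n)) : (qubit_state j0 == qubit_state j) = (j0 == j).
Proof.
apply/eqP/eqP => [e|->//]; apply: val_inj; apply: (bits_inj (N := n)) (ltn_ord _) (ltn_ord _) _ => m hm.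
have := congr1 (fun f : trits n => f (inord (n.-1 - m) : 'I_n)) e; rewrite /= !qsE inordK; last first.
  by rewrite /= ltnS leq_subr.
rewrite /= subKn; last by rewrite -ltnS.
by case: odd; case: odd.
Qed.

Lemma pC_qs (j0 j : 'I_(2 ^ n)) :
  pC j (qubit_state j0) = if j0 == j then wpow (alpha j) else 1.
Proof.
rewrite /pC; set x := foldl _ _ _.
have hx : forall i, x i = if qubit_state j i == 0 then - qubit_state j0 i - 2%:R
                         else qubit_state j0 i.
  move=> i; rewrite /x foldl_fl; last by rewrite filter_uniq // enum_uniq.
  by rewrite mem_filter mem_enum andbT.
have hb : bitv x.
  move=> i; rewrite hx !qsE; by case: odd; case: odd.
have hall : [forall i, x i == 1] = (j0 == j).
  rewrite -qs_inj; apply/forallP/eqP => [h|e i].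
    apply/ffunP => i; move: (h i); rewrite hx !qsE.
    by case: odd; case: odd.
  by rewrite hx e !qsE; case: odd.
rewrite /pin /zphase.
have -> : (val (sh 1 x w0) == 0%N) = false.
  rewrite /sh upd_at; have := hb w0; by case: (x w0) => [[|[|[|?]]] ?].
have -> : (val (run (sh (1 + 1) x) (wire n')) == 0%N) = (j0 == j).
  by rewrite -hall -run_zero.
case: (j0 == j); first by rewrite mul1r.
by rewrite -wpowD addNr wpow0.
Qed.

End Main.

Theorem mainTheorem2 (R : realType) (n : nat) (hn : (0 < n)%N)
  (alpha : 'I_(2 ^ n) -> R) :
  exists gs : seq (gate n),
    emulates (circuit_op alpha gs) (diag_mx (\row_j wpow (alpha j))).
Proof.
case: n hn alpha => [//|n'] _ alpha.
exists (flatten (map (@Cj n') (enum 'I_(2 ^ n'.+1)))).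
move=> j0 x.
rewrite (acts_flatten (enum 'I_(2 ^ n'.+1)) (acts_Cj alpha)).
under eq_bigr => j _ do rewrite pC_qs.
rewrite -big_mkcond /= big_enum_cond /= (big_pred1 j0); last by move=> j; rewrite eq_sym.
rewrite (bigD1 j0) //= !mxE eqxx mulr1n big1 ?addr0 // => i hi.
by rewrite !mxE (negbTE hi) mulr0n mulr0.
Qed.
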